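(* Given a closed $\lambda$-abstraction $\lambda x.\vec t$, we have $\lambda x.\vec t\in[\![\sharp\mathbb B\rightarrow\sharp\mathbb B]\!]$ if and only if there are two value distributions $\vec v_1,\vec v_2\in[\![\sharp\mathbb B]\!]$ such that $\vec t[x:=\mathtt{tt}]\succ^*\vec v_1$, $\vec t[x:=\mathtt{ff}]\succ^*\vec v_2$ and $\langle\vec v_1|\vec v_2\rangle=0$.
   Context: Calculus. Pure values: $v,w::=x\mid\lambda x.\vec{s}\mid *\mid (v_1,v_2)\mid \mathtt{inl}(v)\mid\mathtt{inr}(v)$. Pure terms: $s,t::=v\mid s\,t\mid t;\vec{s}\mid \mathtt{let}\,(x_1,x_2)=t\,\mathtt{in}\,\vec{s}\mid \mathtt{match}\,t\,\{\mathtt{inl}\,x_1\mapsto\vec{s}_1\mid\mathtt{inr}\,x_2\mapsto\vec{s}_2\}$. Term distributions: $\vec{t}::=\vec{0}\mid t\mid \vec{s}+\vec{t}\mid\alpha\cdot\vec{t}$ ($\alpha\in\mathbb{C}$), considered at top level modulo the weak-vector-space congruence $\equiv$ (commutative monoid for $+,\vec0$; $1\cdot\vec t\equiv\vec t$; $\alpha\cdot(\beta\cdot\vec t)\equiv\alpha\beta\cdot\vec t$; both distributivity laws), which does not act inside pure terms and does not identify $0\cdot t$ with $\vec 0$; every distribution has a unique canonical form $\sum_i\alpha_it_i$ with distinct pure $t_i$. Constructs are extended by linearity. $\mathtt{tt}:=\mathtt{inl}( * )$, $\mathtt{ff}:=\mathtt{inr}( * )$. $\vec t[x:=w]$ is substitution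 of a pure value; $\vec t\langle x:=\vec w\rangle=\sum_j\beta_j\vec t[x:=w_j]$ for $\vec w=\sum_j\beta_jw_j$. Atomic evaluation $\triangleright$: $(\lambda x.\vec t)v\triangleright\vec t[x:=v]$, $*;\vec s\triangleright\vec s$, $\mathtt{let}\,(x,y)=(v,w)\,\mathtt{in}\,\vec s\triangleright\vec s[x:=v,y:=w]$, $\mathtt{match}\,\mathtt{inl}(v)\{\ldots\}\triangleright\vec s_1[x_1:=v]$, $\mathtt{match}\,\mathtt{inr}(v)\{\ldots\}\triangleright\vec s_2[x_2:=v]$, plus closure rules evaluating the argument of an application, then the function once the argument is a value, and the scrutinee of $;$, let, match. $\vec t\succ\vec t'$ iff $\vec t\equiv\alpha\cdot s+\vec r$, $\vec t'\equiv\alpha\cdot\vec s'+\vec r$ with $s\triangleright\vec s'$; $\succ^*$ is its reflexive-transitive closure. Semantics. For closed value distributions in canonical form, $\langle\sum_i\alpha_iv_i|\sum_j\beta_jw_j\rangle=\sum_{i,j}\overline{\alpha_i}\beta_j\delta_{v_i,w_j}$, $\|\vec v\|=\sqrt{\langle\vec v|\vec v\rangle}$, $\mathcal S$ the unit sphere. $[\![\mathbb U]\!]=\{*\}$, $[\![A+B]\!]=\{\mathtt{inl}(\vec v):\vec v\in[\![A]\!]\}\cup\{\mathtt{inr}(\vec w):\vec w\in[\![B]\!]\}$, $[\![\sharp A]\!]=\mathrm{Span}([\![A]\!])\cap\mathcal S$, $\mathbb B=\mathbb U+\mathbb U$, $[\![A\rightarrow B]\!]=\{\lambda x.\vec t\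 \text{closed}:\forall\vec v\in[\![A]\!],\ \vec t\langle x:=\vec v\rangle\Vdash B\}$ with $\vec t\Vdash B$ meaning $\vec t\succ^*\vec v$ for some $\vec v\in[\![B]\!]$. *)

(* Defs.v *)
From Stdlib Require Import Reals List Arith ClassicalEpsilon.
From Coquelicot Require Import Coquelicot.
Import ListNotations.

Definition vname := nat.

Inductive val : Type :=
  | VVar  : vname -> val
  | VLam  : vname -> tdist -> val
  | VStar : val
  | VPair : val -> val -> val
  | VInl  : val -> val
  | VInr  : val -> val
with term : Type :=
  | TVal   : val -> term
  | TApp   : term -> term -> term
  | TSeq   : term -> tdist -> term
  | TLet   : vname -> vname -> term -> tdist -> term
  | TMatch : term -> vname -> tdist -> vname -> tdist -> term
with tdist : Type :=
  | DZero : tdist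
  | DTerm : term -> tdist
  | DPlus : tdist -> tdist -> tdist
  | DScal : C -> tdist -> tdist.

Definition vtt : val := VInl VStar.
Definition vff : val := VInr VStar.

Fixpoint fv_val (v : val) : list vname :=
  match v with
  | VVar x => [x]
  | VLam x d => remove Nat.eq_dec x (fv_dist d)
  | VStar => []
  | VPair v1 v2 => fv_val v1 ++ fv_val v2
  | VInl v1 => fv_val v1
  | VInr v1 => fv_val v1
  end
with fv_term (t : term) : list vname :=
  match t with
  | TVal v => fv_val v
  | TApp s u => fv_term s ++ fv_term u
  | TSeq u d => fv_term u ++ fv_dist d
  | TLet x y u d => fv_term u ++ remove Nat.eq_dec y (remove Nat.eq_dec x (fv_dist d))
  | TMatch u x1 d1 x2 d2 =>
      fv_term u ++ remove Nat.eq_dec x1 (fv_dist d1) ++ remove Nat.eq_dec x2 (fv_dist d2)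
  end
with fv_dist (d : tdist) : list vname :=
  match d with
  | DZero => []
  | DTerm t => fv_term t
  | DPlus a b => fv_dist a ++ fv_dist b
  | DScal _ a => fv_dist a
  end.

Definition closed_val (v : val) : Prop := fv_val v = [].

(* Substitution of a (closed) pure value w for x: d[x:=w]. *)
Fixpoint subst_val (v : val) (x : vname) (w : val) : val :=
  match v with
  | VVar y => if Nat.eqb x y then w else VVar y
  | VLam y d => if Nat.eqb x y then VLam y d else VLam y (subst_dist d x w)
  | VStar => VStar
  | VPair v1 v2 => VPair (subst_val v1 x w) (subst_val v2 x w)
  | VInl v1 => VInl (subst_val v1 x w)
  | VInr v1 => VInr (subst_val v1 x w)
  end
with subst_term (t : term) (x : vname) (w : val) : term :=
  match t with
  | TVal v => TVal (subst_val v x w)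
  | TApp s u => TApp (subst_term s x w) (subst_term u x w)
  | TSeq u d => TSeq (subst_term u x w) (subst_dist d x w)
  | TLet y1 y2 u d =>
      TLet y1 y2 (subst_term u x w)
        (if orb (Nat.eqb x y1) (Nat.eqb x y2) then d else subst_dist d x w)
  | TMatch u y1 d1 y2 d2 =>
      TMatch (subst_term u x w)
        y1 (if Nat.eqb x y1 then d1 else subst_dist d1 x w)
        y2 (if Nat.eqb x y2 then d2 else subst_dist d2 x w)
  end
with subst_dist (d : tdist) (x : vname) (w : val) : tdist :=
  match d with
  | DZero => DZero
  | DTerm t => DTerm (subst_term t x w)
  | DPlus a b => DPlus (subst_dist a x w) (subst_dist b x w)
  | DScal c a => DScal c (subst_dist a x w)
  end.

Fixpoint dmap (f : term -> term) (d : tdist) : tdist :=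
  match d with
  | DZero => DZero
  | DTerm t => DTerm (f t)
  | DPlus a b => DPlus (dmap f a) (dmap f b)
  | DScal c a => DScal c (dmap f a)
  end.

(* Bilinear substitution  d<x := w>  = sum_j beta_j d[x:=w_j]  for a value
   distribution w = sum_j beta_j w_j (non-value leaves never occur). *)
Fixpoint subst_lin (d : tdist) (x : vname) (w : tdist) : tdist :=
  match w with
  | DZero => DZero
  | DTerm (TVal u) => subst_dist d x u
  | DTerm _ => DZero
  | DPlus a b => DPlus (subst_lin d x a) (subst_lin d x b)
  | DScal c a => DScal c (subst_lin d x a)
  end.

Definition teq_dec (t u : term) : {t = u} + {t <> u} :=
  excluded_middle_informative (t = u).

Fixpoint cinsert (p : term * C) (l : list (term * C)) : list (term * C) :=
  match l with
  | [] => [p]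
  | q :: l' => if teq_dec (fst p) (fst q) then (fst q, Cplus (snd p) (snd q)) :: l'
               else q :: cinsert p l'
  end.

Fixpoint canon (d : tdist) : list (term * C) :=
  match d with
  | DZero => []
  | DTerm t => [(t, RtoC 1)]
  | DPlus a b => fold_right cinsert (canon b) (canon a)
  | DScal c a => map (fun p => (fst p, Cmult c (snd p))) (canon a)
  end.

Fixpoint clookup (t : term) (l : list (term * C)) : option C :=
  match l with
  | [] => None
  | q :: l' => if teq_dec t (fst q) then Some (snd q) else clookup t l'
  end.

(* The weak-vector-space congruence, via equality of canonical forms. *)
Definition deq (d e : tdist) : Prop := forall t, clookup t (canon d) = clookup t (canon e).

Inductive atomic : term -> tdist -> Prop :=
  | At_beta : forall x b v, atomic (TApp (TVal (VLam x b)) (TVal v)) (subst_dist b x v)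
  | At_seq : forall s, atomic (TSeq (TVal VStar) s) s
  | At_let : forall x y v w s,
      atomic (TLet x y (TVal (VPair v w)) s) (subst_dist (subst_dist s x v) y w)
  | At_inl : forall v x1 s1 x2 s2,
      atomic (TMatch (TVal (VInl v)) x1 s1 x2 s2) (subst_dist s1 x1 v)
  | At_inr : forall v x1 s1 x2 s2,
      atomic (TMatch (TVal (VInr v)) x1 s1 x2 s2) (subst_dist s2 x2 v)
  | At_app_arg : forall s t t', atomic t t' -> atomic (TApp s t) (dmap (TApp s) t')
  | At_app_fun : forall s s' v, atomic s s' ->
      atomic (TApp s (TVal v)) (dmap (fun u => TApp u (TVal v)) s')
  | At_seq_ctx : forall t t' b, atomic t t' -> atomic (TSeq t b) (dmap (fun u => TSeq u b) t')
  | At_let_ctx : forall x y t t' b, atomic t t' ->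
      atomic (TLet x y t b) (dmap (fun u => TLet x y u b) t')
  | At_match_ctx : forall t t' x1 s1 x2 s2, atomic t t' ->
      atomic (TMatch t x1 s1 x2 s2) (dmap (fun u => TMatch u x1 s1 x2 s2) t').

Definition red (d d' : tdist) : Prop :=
  exists (a : C) (s : term) (s' r : tdist),
    deq d (DPlus (DScal a (DTerm s)) r) /\ deq d' (DPlus (DScal a s') r) /\ atomic s s'.

Inductive red_star : tdist -> tdist -> Prop :=
  | RS_refl : forall d, red_star d d
  | RS_step : forall d1 d2 d3, red d1 d2 -> red_star d2 d3 -> red_star d1 d3.

Definition C_0 : C := RtoC 0.
Definition csum (l : list C) : C := fold_right Cplus (RtoC 0) l.

Definition inner (d e : tdist) : C :=
  csum (map (fun p => csum (map (fun q =>
          Cmult (Cmult (Cconj (snd p)) (snd q))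
                (if teq_dec (fst p) (fst q) then RtoC 1 else RtoC 0)) (canon e)))
       (canon d)).

Definition dnorm (d : tdist) : R := sqrt (Re (inner d d)).

Inductive ty : Type :=
  | TyU : ty
  | TySum : ty -> ty -> ty
  | TySharp : ty -> ty
  | TyArrow : ty -> ty -> ty.

Definition TyB : ty := TySum TyU TyU.

Fixpoint lincomb (l : list (C * tdist)) : tdist :=
  match l with
  | [] => DZero
  | (a, u) :: l' => DPlus (DScal a u) (lincomb l')
  end.

Definition Span (X : tdist -> Prop) (d : tdist) : Prop :=
  exists l : list (C * tdist), List.Forall (fun p => X (snd p)) l /\ deq d (lincomb l).

Definition inl_t (t : term) : term :=
  match t with TVal v => TVal (VInl v) | _ => t end.
Definition inr_t (t : term) : term :=
  match t with TVal v => TVal (VInr v) | _ => t end.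

Fixpoint interp (A : ty) : tdist -> Prop :=
  match A with
  | TyU => fun d => deq d (DTerm (TVal VStar))
  | TySum A1 A2 => fun d =>
      (exists u, interp A1 u /\ deq d (dmap inl_t u)) \/
      (exists u, interp A2 u /\ deq d (dmap inr_t u))
  | TySharp A1 => fun d => Span (interp A1) d /\ dnorm d = 1%R
  | TyArrow A1 A2 => fun d =>
      exists x b, deq d (DTerm (TVal (VLam x b))) /\ closed_val (VLam x b) /\
        forall v, interp A1 v -> exists w, red_star (subst_lin b x v) w /\ interp A2 w
  end.

(* Main.v *)
Require Import Defs.
From Stdlib Require Import Reals List Arith ClassicalEpsilon Lra Psatz Permutation FunctionalExtensionality.
From Coquelicot Require Import Coquelicot.
Import ListNotations.
Import Defs.

Definition opadd (a b : option C) : option C :=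
  match a, b with
  | Some x, Some y => Some (Cplus x y)
  | Some x, None => Some x
  | None, y => y
  end.

Fixpoint look (d : tdist) (t : term) : option C :=
  match d with
  | DZero => None
  | DTerm u => if teq_dec t u then Some (RtoC 1) else None
  | DPlus a b => opadd (look a t) (look b t)
  | DScal c a => option_map (Cmult c) (look a t)
  end.

Lemma clookup_cinsert t p l :
  clookup t (cinsert p l) =
  if teq_dec t (fst p) then
    match clookup t l with None => Some (snd p) | Some c => Some (Cplus (snd p) c) end
  else clookup t l.
Proof.
  induction l as [|q l IH]; simpl.
  - destruct (teq_dec t (fst p)); reflexivity.
  - destruct (teq_dec (fst p) (fst q)) as [e|n]; simpl.
    + destruct (teq_dec t (fst q)); destruct (teq_dec t (fst p)); try congruence.
    + destruct (teq_dec t (fst q)) as [e|n']; rewrite ?IH.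
      * destruct (teq_dec t (fst p)); congruence.
      * reflexivity.
Qed.

Lemma in_keys_cinsert k p l : In k (map fst (cinsert p l)) <-> k = fst p \/ In k (map fst l).
Proof.
  induction l as [|q l IH]; simpl.
  - split; intros [H|H]; auto; contradiction.
  - destruct (teq_dec (fst p) (fst q)); simpl.
    + rewrite e. firstorder.
    + rewrite IH. firstorder.
Qed.

Lemma nodup_cinsert p l : NoDup (map fst l) -> NoDup (map fst (cinsert p l)).
Proof.
  induction l as [|q l IH]; simpl; intros H.
  - constructor; [simpl; tauto| constructor].
  - inversion H; subst.
    destruct (teq_dec (fst p) (fst q)); simpl.
    + constructor; auto.
    + constructor; auto. rewrite in_keys_cinsert. intros [E|E]; congruence.
Qed.

Lemma clookup_none_notin t l : ~ In t (map fst l) -> clookup t l = None.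
Proof.
  induction l as [|q l IH]; simpl; auto.
  intros H. destruct (teq_dec t (fst q)); [exfalso; auto|]. auto.
Qed.

Lemma canon_fold_lookup t la l0 :
  NoDup (map fst la) ->
  clookup t (fold_right cinsert l0 la) = opadd (clookup t la) (clookup t l0).
Proof.
  induction la as [|p la IH]; simpl; intros H.
  - destruct (clookup t l0); reflexivity.
  - inversion H; subst. rewrite clookup_cinsert, IH by auto.
    destruct (teq_dec t (fst p)) as [e|n].
    + subst. rewrite (clookup_none_notin _ la) by auto. simpl.
      destruct (clookup (fst p) l0); reflexivity.
    + reflexivity.
Qed.

Lemma nodup_fold la l0 : NoDup (map fst l0) -> NoDup (map fst (fold_right cinsert l0 la)).
Proof. induction la; simpl; auto using nodup_cinsert. Qed.

Lemma clookup_map_scal t c l :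
  clookup t (map (fun p => (fst p, Cmult c (snd p))) l) = option_map (Cmult c) (clookup t l).
Proof.
  induction l as [|q l IH]; simpl; auto.
  destruct (teq_dec t (fst q)); auto.
Qed.

Lemma map_fst_scal c l : map fst (map (fun p : term * C => (fst p, Cmult c (snd p))) l) = map fst l.
Proof. rewrite map_map. reflexivity. Qed.

Lemma canon_nodup d : NoDup (map fst (canon d)).
Proof.
  induction d; simpl.
  - constructor.
  - constructor; [simpl; tauto | constructor].
  - apply nodup_fold; auto.
  - rewrite map_fst_scal; auto.
Qed.

Lemma canon_look d t : clookup t (canon d) = look d t.
Proof.
  induction d; simpl; auto.
  - rewrite canon_fold_lookup by apply canon_nodup. congruence.
  - rewrite clookup_map_scal. congruence.
Qed.

Lemma deq_look d e : deq d e <-> forall t, look d t = look e t.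
Proof.
  unfold deq; split; intros H t; specialize (H t); rewrite ?canon_look in *; auto.
Qed.

Local Open Scope C_scope.

Definition wsum (F : term -> C) (l : list (term * C)) : C :=
  csum (map (fun p => Cmult (snd p) (F (fst p))) l).

Lemma wsum_cinsert F p l : wsum F (cinsert p l) = Cplus (Cmult (snd p) (F (fst p))) (wsum F l).
Proof.
  unfold wsum. induction l as [|q l IH]; simpl.
  - reflexivity.
  - destruct (teq_dec (fst p) (fst q)) as [e|n]; simpl.
    + rewrite e. ring.
    + rewrite IH. ring.
Qed.

Lemma wsum_fold F la l0 : wsum F (fold_right cinsert l0 la) = Cplus (wsum F la) (wsum F l0).
Proof.
  induction la as [|p la IH]; simpl.
  - unfold wsum at 2; simpl. ring.
  - rewrite wsum_cinsert, IH. unfold wsum; simpl. ring.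
Qed.

Lemma wsum_scal F c l : wsum F (map (fun p => (fst p, Cmult c (snd p))) l) = Cmult c (wsum F l).
Proof.
  unfold wsum. induction l as [|q l IH]; simpl.
  - ring.
  - rewrite IH. ring.
Qed.

Definition W (F : term -> C) (d : tdist) : C := wsum F (canon d).

Lemma W_zero F : W F DZero = RtoC 0. Proof. reflexivity. Qed.
Lemma W_term F u : W F (DTerm u) = F u.
Proof. unfold W, wsum; simpl. ring. Qed.
Lemma W_plus F a b : W F (DPlus a b) = Cplus (W F a) (W F b).
Proof. unfold W; simpl. apply wsum_fold. Qed.
Lemma W_scal F c a : W F (DScal c a) = Cmult c (W F a).
Proof. unfold W; simpl. apply wsum_scal. Qed.

Lemma in_clookup k c l : NoDup (map fst l) -> (In (k, c) l <-> clookup k l = Some c).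
Proof.
  induction l as [|q l IH]; simpl; intros H.
  - split; [tauto | discriminate].
  - inversion H; subst. destruct (teq_dec k (fst q)) as [e|n].
    + subst. split.
      * intros [E|E]. { rewrite E; reflexivity. }
        exfalso. apply H2. change (fst q) with (fst (fst q, c)). apply in_map; auto.
      * intros E; injection E; intros; subst. left. destruct q; reflexivity.
    + rewrite <- IH by auto. split; [intros [E|E]; auto; subst; simpl in n; congruence | auto].
Qed.

Lemma csum_perm l l' : Permutation l l' -> csum l = csum l'.
Proof.
  induction 1; simpl; auto.
  - rewrite IHPermutation; reflexivity.
  - ring.
  - congruence.
Qed.

Lemma W_deq F d e : deq d e -> W F d = W F e.
Proof.
  intros H. unfold W, wsum. apply csum_perm. apply Permutation_map.
  pose proof (canon_nodup d) as Nd. pose proof (canon_nodup e) as Ne.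
  apply NoDup_Permutation; try (eapply NoDup_map_inv; eauto).
  intros [k c]. rewrite !in_clookup by auto. rewrite (H k). tauto.
Qed.

Definition key d k := look d k <> None.

Lemma opadd_none a b : opadd a b <> None <-> a <> None \/ b <> None.
Proof. destruct a, b; simpl; split; intros; try tauto; try discriminate; try (left; discriminate); try (right; discriminate); firstorder. Qed.

Lemma key_plus a b k : key (DPlus a b) k <-> key a k \/ key b k.
Proof. unfold key; simpl. apply opadd_none. Qed.
Lemma key_scal c a k : key (DScal c a) k <-> key a k.
Proof. unfold key; simpl. destruct (look a k); simpl; split; intros; congruence. Qed.
Lemma key_term u k : key (DTerm u) k <-> k = u.
Proof. unfold key; simpl. destruct (teq_dec k u); split; intros; congruence. Qed.
Lemma key_zero k : ~ key DZero k.
Proof. unfold key; simpl; auto. Qed.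

Fixpoint leaves (P : term -> Prop) (d : tdist) : Prop :=
  match d with
  | DZero => True
  | DTerm u => P u
  | DPlus a b => leaves P a /\ leaves P b
  | DScal _ a => leaves P a
  end.

Lemma keys_leaves (P : term -> Prop) d : (forall k, key d k -> P k) -> leaves P d.
Proof.
  induction d; simpl; intros H.
  - auto.
  - apply H. apply key_term. reflexivity.
  - split; [apply IHd1|apply IHd2]; intros k Hk; apply H; apply key_plus; auto.
  - apply IHd; intros k Hk; apply H; apply key_scal; auto.
Qed.

Lemma W_ext_keys F G d : (forall k, key d k -> F k = G k) -> W F d = W G d.
Proof.
  induction d; intros H.
  - reflexivity.
  - rewrite !W_term. apply H, key_term; reflexivity.
  - rewrite !W_plus. rewrite IHd1, IHd2; auto; intros k Hk; apply H, key_plus; auto.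
  - rewrite !W_scal. rewrite IHd; auto; intros k Hk; apply H, key_scal; auto.
Qed.

Lemma clookup_in_some k c l : In (k, c) l -> clookup k l <> None.
Proof.
  induction l as [|q l IH]; simpl; [tauto|].
  destruct (teq_dec k (fst q)); [discriminate|].
  intros [E|E]; [subst; simpl in *; congruence | auto].
Qed.

Lemma in_canon_key d k c : In (k, c) (canon d) -> key d k.
Proof. intros H. unfold key. rewrite <- canon_look. eapply clookup_in_some; eauto. Qed.

Lemma deq_refl d : deq d d. Proof. intros t; reflexivity. Qed.
Lemma deq_sym d e : deq d e -> deq e d. Proof. intros H t; auto. Qed.
Lemma deq_trans d e f : deq d e -> deq e f -> deq d f. Proof. intros H1 H2 t; congruence. Qed.

Lemma key_deq d e k : deq d e -> key d k -> key e k.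
Proof. intros H. rewrite deq_look in H. unfold key. rewrite H. auto. Qed.

Lemma opadd_assoc a b c : opadd a (opadd b c) = opadd (opadd a b) c.
Proof. destruct a, b, c; simpl; auto; f_equal; ring. Qed.
Lemma opadd_comm a b : opadd a b = opadd b a.
Proof. destruct a, b; simpl; auto; f_equal; ring. Qed.
Lemma map_opadd c a b : option_map (Cmult c) (opadd a b) = opadd (option_map (Cmult c) a) (option_map (Cmult c) b).
Proof. destruct a, b; simpl; auto; f_equal; ring. Qed.
Lemma map_map_mult c a x : option_map (Cmult c) (option_map (Cmult a) x) = option_map (Cmult (Cmult c a)) x.
Proof. destruct x; simpl; auto; f_equal; ring. Qed.

Lemma red_plus_l d d' e : red d d' -> red (DPlus d e) (DPlus d' e).
Proof.
  intros (a & s & s' & r & H1 & H2 & H3). exists a, s, s', (DPlus r e).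
  rewrite deq_look in H1, H2. split; [|split; [|exact H3]]; apply deq_look; intros t; simpl in *;
  rewrite ?H1, ?H2; simpl; apply opadd_assoc || (symmetry; apply opadd_assoc).
Qed.

Lemma red_plus_r d d' e : red d d' -> red (DPlus e d) (DPlus e d').
Proof.
  intros (a & s & s' & r & H1 & H2 & H3). exists a, s, s', (DPlus e r).
  rewrite deq_look in H1, H2. split; [|split; [|exact H3]]; apply deq_look; intros t; simpl in *;
  rewrite ?H1, ?H2; simpl; rewrite !opadd_assoc; f_equal; apply opadd_comm.
Qed.

Lemma red_scal d d' c : red d d' -> red (DScal c d) (DScal c d').
Proof.
  intros (a & s & s' & r & H1 & H2 & H3). exists (Cmult c a), s, s', (DScal c r).
  rewrite deq_look in H1, H2. split; [|split; [|exact H3]]; apply deq_look; intros t; simpl in *;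
  rewrite ?H1, ?H2; simpl; rewrite map_opadd, map_map_mult; reflexivity.
Qed.

Lemma red_star_trans a b c : red_star a b -> red_star b c -> red_star a c.
Proof. induction 1; eauto using RS_step. Qed.

Lemma rs_plus_l d d' e : red_star d d' -> red_star (DPlus d e) (DPlus d' e).
Proof. induction 1; [constructor| eapply RS_step; eauto using red_plus_l]. Qed.
Lemma rs_plus_r d d' e : red_star d d' -> red_star (DPlus e d) (DPlus e d').
Proof. induction 1; [constructor| eapply RS_step; eauto using red_plus_r]. Qed.
Lemma rs_scal d d' c : red_star d d' -> red_star (DScal c d) (DScal c d').
Proof. induction 1; [constructor| eapply RS_step; eauto using red_scal]. Qed.

Inductive ev : term -> (term -> C) -> Prop :=
| ev_val v : ev (TVal v) (fun t => if teq_dec t (TVal v) then RtoC 1 else RtoC 0)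
| ev_step s s' V : atomic s s' -> evd s' V -> ev s V
with evd : tdist -> (term -> C) -> Prop :=
| evd_zero : evd DZero (fun _ => RtoC 0)
| evd_term u V : ev u V -> evd (DTerm u) V
| evd_plus a b V1 V2 : evd a V1 -> evd b V2 -> evd (DPlus a b) (fun t => Cplus (V1 t) (V2 t))
| evd_scal c a V : evd a V -> evd (DScal c a) (fun t => Cmult c (V t)).

Scheme ev_mut := Induction for ev Sort Prop
with evd_mut := Induction for evd Sort Prop.
Combined Scheme ev_evd_mut from ev_mut, evd_mut.

Lemma atomic_val v x : ~ atomic (TVal v) x.
Proof. intros H; inversion H. Qed.

Lemma atomic_det s a : atomic s a -> forall b, atomic s b -> a = b.
Proof.
  induction 1; intros bb Hb; inversion Hb; subst;
  try reflexivity;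
  try (exfalso; eapply atomic_val; eassumption);
  try (match goal with H : atomic (TVal _) _ |- _ => inversion H end);
  try (f_equal; auto).
Qed.

Lemma ev_det_all :
  (forall s V, ev s V -> forall V', ev s V' -> V = V') /\
  (forall d V, evd d V -> forall V', evd d V' -> V = V').
Proof.
  apply ev_evd_mut.
  - intros v V' H; inversion H; subst; [reflexivity | exfalso; eapply atomic_val; eauto].
  - intros s s' V a e IH V' H; inversion H; subst.
    + exfalso; eapply atomic_val; eauto.
    + assert (s' = s'0) by (eapply atomic_det; eauto). subst. auto.
  - intros V' H; inversion H; reflexivity.
  - intros u V e IH V' H; inversion H; subst; auto.
  - intros a b V1 V2 e1 IH1 e2 IH2 V' H; inversion H; subst.
    match goal with A : evd a _, B : evd b _ |- _ => rewrite (IH1 _ A), (IH2 _ B) end; reflexivity.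
  - intros c a V e IH V' H; inversion H; subst.
    match goal with A : evd a _ |- _ => rewrite (IH _ A) end; reflexivity.
Qed.

Lemma ev_det s V V' : ev s V -> ev s V' -> V = V'.
Proof. intros; eapply (proj1 ev_det_all); eauto. Qed.

Definition evf (u : term) : term -> C :=
  match excluded_middle_informative (exists V, ev u V) with
  | left H => proj1_sig (constructive_indefinite_description _ H)
  | right _ => fun _ => RtoC 0
  end.

Lemma evf_spec u V : ev u V -> evf u = V.
Proof.
  intros H. unfold evf. destruct excluded_middle_informative as [e|n].
  - destruct (constructive_indefinite_description _ e) as [V' HV']; simpl. eapply ev_det; eauto.
  - exfalso; eauto.
Qed.

Definition Val (d : tdist) (t : term) : C := W (fun u => evf u t) d.

Definition good d := forall k, key d k -> exists V, ev k V.

Lemma good_evd d : good d -> evd d (fun t => Val d t).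
Proof.
  induction d; intros G.
  - replace (fun t => Val DZero t) with (fun _ : term => RtoC 0) by reflexivity. constructor.
  - destruct (G t) as [V HV]; [apply key_term; reflexivity|].
    replace (fun t0 => Val (DTerm t) t0) with V.
    + constructor; auto.
    + extensionality t0. unfold Val. rewrite W_term. rewrite (evf_spec _ _ HV). reflexivity.
  - replace (fun t => Val (DPlus d1 d2) t) with (fun t => Cplus (Val d1 t) (Val d2 t)).
    + constructor; [apply IHd1|apply IHd2]; intros k Hk; apply G, key_plus; auto.
    + extensionality t0. unfold Val. rewrite W_plus. reflexivity.
  - replace (fun t => Val (DScal c d) t) with (fun t => Cmult c (Val d t)).
    + constructor; apply IHd; intros k Hk; apply G, key_scal; auto.
    + extensionality t0. unfold Val. rewrite W_scal. reflexivity.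
Qed.

Definition delta (t u : term) : C := if teq_dec t u then RtoC 1 else RtoC 0.

Lemma back d w : red_star d w -> (forall k, key w k -> exists v, k = TVal v) ->
  good d /\ forall t, Val d t = W (delta t) w.
Proof.
  induction 1 as [w | d1 d2 w R RS IH]; intros Hw.
  - split.
    + intros k Hk. destruct (Hw k Hk) as [v ->]. eexists; apply ev_val.
    + intros t. unfold Val. apply W_ext_keys. intros k Hk. destruct (Hw k Hk) as [v ->].
      rewrite (evf_spec _ _ (ev_val v)). reflexivity.
  - destruct (IH Hw) as [G2 V2]. clear IH.
    destruct R as (a & s & s' & r & H1 & H2 & H3).
    assert (Gs' : good s').
    { intros k Hk. apply G2. apply (key_deq _ _ _ (deq_sym _ _ H2)). apply key_plus. left. apply key_scal. auto. }
    assert (Gr : forall k, key r k -> exists V, ev k V).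
    { intros k Hk. apply G2. apply (key_deq _ _ _ (deq_sym _ _ H2)). apply key_plus. right. auto. }
    assert (Es : ev s (fun t => Val s' t)) by (eapply ev_step; eauto using good_evd).
    split.
    + intros k Hk. apply (key_deq _ _ _ H1) in Hk. apply key_plus in Hk as [Hk|Hk].
      * apply key_scal, key_term in Hk. subst. eauto.
      * auto.
    + intros t. rewrite <- V2. unfold Val. rewrite (W_deq _ _ _ H1), (W_deq _ _ _ H2).
      rewrite !W_plus, !W_scal, W_term. rewrite (evf_spec _ _ Es). reflexivity.
Qed.

Definition Ttt := TVal vtt.
Definition Tff := TVal vff.
Lemma tt_ff : Ttt <> Tff. Proof. discriminate. Qed.

Definition cf d k := W (delta k) d.

Lemma Cconj_0 : Cconj (RtoC 0) = RtoC 0.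
Proof. unfold Cconj, RtoC; simpl. f_equal; ring. Qed.

Lemma Cconj_1 : Cconj (RtoC 1) = RtoC 1.
Proof. unfold Cconj, RtoC; simpl. f_equal; ring. Qed.

Lemma inner_inner a k l :
  csum (map (fun q => Cmult (Cmult a (snd q)) (if teq_dec k (fst q) then RtoC 1 else RtoC 0)) l)
  = Cmult a (wsum (delta k) l).
Proof.
  unfold wsum, delta. induction l as [|q l IH]; simpl.
  - ring.
  - rewrite IH. ring.
Qed.

Lemma outer_sum (G : term -> C) l :
  (forall p, In p l -> fst p = Ttt \/ fst p = Tff) ->
  csum (map (fun p => Cmult (Cconj (snd p)) (G (fst p))) l) =
  Cplus (Cmult (Cconj (wsum (delta Ttt) l)) (G Ttt)) (Cmult (Cconj (wsum (delta Tff) l)) (G Tff)).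
Proof.
  unfold wsum. induction l as [|q l IH]; simpl; intros H.
  - rewrite Cconj_0. ring.
  - rewrite IH by auto. rewrite !Cplus_conj, !Cmult_conj. unfold delta.
    destruct (H q (or_introl eq_refl)) as [E|E]; rewrite E.
    + destruct (teq_dec Ttt Ttt); [|congruence]. destruct (teq_dec Tff Ttt); [discriminate|].
      rewrite ?Cconj_0, ?Cconj_1. ring.
    + destruct (teq_dec Tff Tff); [|congruence]. destruct (teq_dec Ttt Tff); [discriminate|].
      rewrite ?Cconj_0, ?Cconj_1. ring.
Qed.

Definition keysB d := forall k, key d k -> k = Ttt \/ k = Tff.

Lemma inner_formula d e : keysB d ->
  inner d e = Cplus (Cmult (Cconj (cf d Ttt)) (cf e Ttt)) (Cmult (Cconj (cf d Tff)) (cf e Tff)).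
Proof.
  intros H. unfold inner.
  rewrite (map_ext _ (fun p => Cmult (Cconj (snd p)) (cf e (fst p)))).
  - apply outer_sum. intros [k c] Hp. simpl. apply H. eapply in_canon_key; eauto.
  - intros p. rewrite inner_inner. reflexivity.
Qed.

Lemma cf_zero k : cf DZero k = RtoC 0. Proof. reflexivity. Qed.
Lemma cf_term u k : cf (DTerm u) k = delta k u. Proof. apply W_term. Qed.
Lemma cf_plus a b k : cf (DPlus a b) k = Cplus (cf a k) (cf b k). Proof. apply W_plus. Qed.
Lemma cf_scal c a k : cf (DScal c a) k = Cmult c (cf a k). Proof. apply W_scal. Qed.

Lemma dnorm_iff d : dnorm d = 1%R <-> Re (inner d d) = 1%R.
Proof.
  unfold dnorm. split; intros H.
  - destruct (Rlt_or_le (Re (inner d d)) 0) as [L|L].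
    + rewrite sqrt_neg_0 in H by lra. lra.
    + rewrite <- (sqrt_sqrt _ L), H. ring.
  - rewrite H. apply sqrt_1.
Qed.

Lemma key_lincomb l k : key (lincomb l) k -> exists p, In p l /\ key (snd p) k.
Proof.
  induction l as [|[a u] l IH]; simpl; intros H.
  - exfalso; eapply key_zero; eauto.
  - apply key_plus in H as [H|H].
    + apply key_scal in H. exists (a, u); simpl; auto.
    + destruct (IH H) as [p [Hp Hk]]. eauto.
Qed.

Lemma key_dmap f u k : key (dmap f u) k -> exists k', key u k' /\ k = f k'.
Proof.
  induction u; simpl; intros H.
  - exfalso; eapply key_zero; eauto.
  - apply key_term in H. exists t. split; auto. apply key_term; auto.
  - apply key_plus in H as [H|H]; [destruct (IHu1 H) as (k' & H1 & H2) | destruct (IHu2 H) as (k' & H1 & H2)];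
      exists k'; split; auto; apply key_plus; auto.
  - apply key_scal in H. destruct (IHu H) as (k' & H1 & H2). exists k'; split; auto. apply key_scal; auto.
Qed.

Lemma interpB_keys e : interp TyB e -> keysB e.
Proof.
  intros [[u [Hu He]]|[u [Hu He]]] k Hk; apply (key_deq _ _ _ He) in Hk;
  destruct (key_dmap _ _ _ Hk) as (k' & H1 & H2);
  apply (key_deq _ _ _ Hu), key_term in H1; subst; simpl; auto.
Qed.

Lemma sharpB_elim d : interp (TySharp TyB) d -> keysB d /\ Re (inner d d) = 1%R.
Proof.
  intros [[l [HF Hd]] Hn]. split; [|apply dnorm_iff; auto].
  intros k Hk. apply (key_deq _ _ _ Hd) in Hk. destruct (key_lincomb _ _ Hk) as (p & Hp & Hk').
  rewrite Forall_forall in HF. apply (interpB_keys _ (HF p Hp)); auto.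
Qed.

Lemma interpB_tt : interp TyB (DTerm Ttt).
Proof. left. exists (DTerm (TVal VStar)). split; apply deq_refl. Qed.
Lemma interpB_ff : interp TyB (DTerm Tff).
Proof. right. exists (DTerm (TVal VStar)). split; apply deq_refl. Qed.

Lemma look_none d k : ~ key d k -> look d k = None.
Proof. unfold key. destruct (look d k); auto. intros H; exfalso; apply H; discriminate. Qed.

Lemma sharpB_intro d : keysB d -> Re (inner d d) = 1%R -> interp (TySharp TyB) d.
Proof.
  intros HK Hn. split; [|apply dnorm_iff; auto].
  assert (Hother : forall k, k <> Ttt -> k <> Tff -> look d k = None).
  { intros k N1 N2. apply look_none. intros Hk. destruct (HK k Hk); auto. }
  destruct (look d Ttt) as [a|] eqn:E1, (look d Tff) as [b|] eqn:E2.
  - exists [(a, DTerm Ttt); (b, DTerm Tff)]. split.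
    + repeat apply Forall_cons; try apply Forall_nil; first [apply interpB_tt | apply interpB_ff].
    + apply deq_look. intros t. simpl.
      destruct (teq_dec t Ttt) as [->|n1]; [|destruct (teq_dec t Tff) as [->|n2]]; simpl.
      * rewrite E1. destruct (teq_dec Ttt Tff); [discriminate|]. simpl. f_equal. ring.
      * rewrite E2. simpl. f_equal. ring.
      * auto.
  - exists [(a, DTerm Ttt)]. split.
    + repeat apply Forall_cons; try apply Forall_nil; first [apply interpB_tt | apply interpB_ff].
    + apply deq_look. intros t. simpl.
      destruct (teq_dec t Ttt) as [->|n1]; simpl.
      * rewrite E1. f_equal. ring.
      * destruct (teq_dec t Tff) as [->|n2]; auto.
  - exists [(b, DTerm Tff)]. split.
    + repeat apply Forall_cons; try apply Forall_nil; first [apply interpB_tt | apply interpB_ff].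
    + apply deq_look. intros t. simpl.
      destruct (teq_dec t Tff) as [->|n1]; simpl.
      * rewrite E2. f_equal. ring.
      * destruct (teq_dec t Ttt) as [->|n2]; auto.
  - exists []. split; [constructor|].
    apply deq_look. intros t. simpl.
    destruct (teq_dec t Tff) as [->|n1]; auto.
    destruct (teq_dec t Ttt) as [->|n2]; auto.
Qed.

Ltac dec_all := repeat match goal with |- context [teq_dec ?a ?b] => destruct (teq_dec a b) end;
  try (exfalso; apply tt_ff; congruence); try (exfalso; apply tt_ff; symmetry; congruence);
  try (exfalso; congruence).

Lemma normB d : keysB d ->
  Re (inner d d) = ((fst (cf d Ttt))^2 + (snd (cf d Ttt))^2 + (fst (cf d Tff))^2 + (snd (cf d Tff))^2)%R.
Proof.
  intros H. rewrite (inner_formula _ _ H).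
  destruct (cf d Ttt) as [a1 a2], (cf d Tff) as [b1 b2]. unfold Re, Cplus, Cmult, Cconj; simpl. ring.
Qed.

Lemma innerB d e : keysB d ->
  inner d e = ((fst (cf d Ttt) * fst (cf e Ttt) + snd (cf d Ttt) * snd (cf e Ttt)
               + fst (cf d Tff) * fst (cf e Tff) + snd (cf d Tff) * snd (cf e Tff))%R,
               (fst (cf d Ttt) * snd (cf e Ttt) - snd (cf d Ttt) * fst (cf e Ttt)
               + fst (cf d Tff) * snd (cf e Tff) - snd (cf d Tff) * fst (cf e Tff))%R).
Proof.
  intros H. rewrite (inner_formula _ _ H).
  destruct (cf d Ttt) as [a1 a2], (cf d Tff) as [b1 b2], (cf e Ttt) as [c1 c2], (cf e Tff) as [e1 e2].
  unfold Cplus, Cmult, Cconj; simpl. f_equal; ring.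
Qed.

Lemma deq_term u u' : deq (DTerm u) (DTerm u') -> u = u'.
Proof. intros H. apply key_term. apply (key_deq _ _ _ H). apply key_term. reflexivity. Qed.

Lemma keysB_vals d : keysB d -> forall k, key d k -> exists v, k = TVal v.
Proof. intros H k Hk. destruct (H k Hk) as [->| ->]; eexists; reflexivity. Qed.

Section Rep.
Variables v1 v2 : tdist.
Fixpoint rep (v : tdist) : tdist :=
  match v with
  | DZero => DZero
  | DTerm u => if teq_dec u Ttt then v1 else v2
  | DPlus a b => DPlus (rep a) (rep b)
  | DScal c a => DScal c (rep a)
  end.

Lemma rep_keys v : keysB v1 -> keysB v2 -> keysB (rep v).
Proof.
  intros H1 H2. induction v; simpl; intros k Hk.
  - exfalso; eapply key_zero; eauto.
  - destruct (teq_dec t Ttt); auto.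
  - apply key_plus in Hk as [Hk|Hk]; auto.
  - apply key_scal in Hk; auto.
Qed.

Lemma rep_cf v k : leaves (fun u => u = Ttt \/ u = Tff) v ->
  cf (rep v) k = Cplus (Cmult (cf v Ttt) (cf v1 k)) (Cmult (cf v Tff) (cf v2 k)).
Proof.
  induction v; simpl; intros H.
  - rewrite !cf_zero. ring.
  - rewrite !cf_term. unfold delta.
    destruct H as [-> | ->]; dec_all; ring.
  - destruct H. rewrite !cf_plus, IHv1, IHv2 by auto. ring.
  - rewrite !cf_scal, IHv by auto. ring.
Qed.

Lemma rep_red x t v : red_star (subst_dist t x vtt) v1 -> red_star (subst_dist t x vff) v2 ->
  leaves (fun u => u = Ttt \/ u = Tff) v -> red_star (subst_lin t x v) (rep v).
Proof.
  intros R1 R2. induction v; simpl; intros H.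
  - constructor.
  - destruct H as [-> | ->]; dec_all; auto.
  - destruct H. eapply red_star_trans; [apply rs_plus_l; eauto | apply rs_plus_r; eauto].
  - apply rs_scal; auto.
Qed.
End Rep.

Lemma sharp_point (a b : C) :
  ((fst a)^2 + (snd a)^2 + (fst b)^2 + (snd b)^2)%R = 1%R ->
  interp (TySharp TyB) (DPlus (DScal a (DTerm Ttt)) (DScal b (DTerm Tff))).
Proof.
  intros H.
  assert (K : keysB (DPlus (DScal a (DTerm Ttt)) (DScal b (DTerm Tff)))).
  { intros k Hk. apply key_plus in Hk as [Hk|Hk]; apply key_scal, key_term in Hk; auto. }
  apply sharpB_intro; auto. rewrite normB by auto.
  rewrite !cf_plus, !cf_scal, !cf_term. unfold delta.
  dec_all.
  destruct a as [a1 a2], b as [b1 b2]. unfold Cplus, Cmult, RtoC; simpl in *. nra.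
Qed.

Lemma sharp_tt : interp (TySharp TyB) (DTerm Ttt).
Proof.
  assert (K : keysB (DTerm Ttt)) by (intros k Hk; apply key_term in Hk; auto).
  apply sharpB_intro; auto. rewrite normB by auto. rewrite !cf_term. unfold delta. dec_all.
  simpl. ring.
Qed.

Lemma sharp_ff : interp (TySharp TyB) (DTerm Tff).
Proof.
  assert (K : keysB (DTerm Tff)) by (intros k Hk; apply key_term in Hk; auto).
  apply sharpB_intro; auto. rewrite normB by auto. rewrite !cf_term. unfold delta. dec_all.
  simpl. ring.
Qed.

Theorem proposition5 (x : vname) (t : tdist) (Hclosed : closed_val (VLam x t)) :
  interp (TyArrow (TySharp TyB) (TySharp TyB)) (DTerm (TVal (VLam x t))) <->
  exists v1 v2 : tdist,
    interp (TySharp TyB) v1 /\ interp (TySharp TyB) v2 /\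
    red_star (subst_dist t x vtt) v1 /\ red_star (subst_dist t x vff) v2 /\
    inner v1 v2 = C_0.
Proof.
  split.
  - intros (x' & b & Hd & _ & H).
    apply deq_term in Hd. injection Hd; intros; subst x' b.
    destruct (H (DTerm Ttt)) as (w1 & R1 & S1); [apply sharp_tt|].
    destruct (H (DTerm Tff)) as (w2 & R2 & S2); [apply sharp_ff|].
    destruct (H (DPlus (DScal (RtoC (3/5)) (DTerm Ttt)) (DScal (RtoC (4/5)) (DTerm Tff)))) as (wp & Rp & Sp).
    { apply sharp_point. simpl. field. }
    destruct (H (DPlus (DScal (RtoC (3/5)) (DTerm Ttt)) (DScal (0, 4/5)%R (DTerm Tff)))) as (wi & Ri & Si).
    { apply sharp_point. simpl. field. }
    simpl in R1, R2, Rp, Ri. fold vtt vff in R1, R2, Rp, Ri.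
    exists w1, w2. split; [auto|split; [auto|]].
    apply sharpB_elim in S1 as [K1 N1]. apply sharpB_elim in S2 as [K2 N2].
    apply sharpB_elim in Sp as [Kp Np]. apply sharpB_elim in Si as [Ki Ni].
    destruct (back _ _ R1 (keysB_vals _ K1)) as [_ B1].
    destruct (back _ _ R2 (keysB_vals _ K2)) as [_ B2].
    destruct (back _ _ Rp (keysB_vals _ Kp)) as [_ Bp].
    destruct (back _ _ Ri (keysB_vals _ Ki)) as [_ Bi].
    assert (Ep : forall k, cf wp k = Cplus (Cmult (RtoC (3/5)) (cf w1 k)) (Cmult (RtoC (4/5)) (cf w2 k))).
    { intros k. unfold cf. rewrite <- Bp, <- B1, <- B2. unfold Val. rewrite W_plus, !W_scal. reflexivity. }
    assert (Ei : forall k, cf wi k = Cplus (Cmult (RtoC (3/5)) (cf w1 k)) (Cmult (0, 4/5)%R (cf w2 k))).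
    { intros k. unfold cf. rewrite <- Bi, <- B1, <- B2. unfold Val. rewrite W_plus, !W_scal. reflexivity. }
    rewrite normB in N1, N2, Np, Ni by auto. rewrite !Ep in Np. rewrite !Ei in Ni.
    rewrite innerB by auto. unfold C_0, RtoC.
    destruct (cf w1 Ttt) as [p1 p2], (cf w1 Tff) as [q1 q2],
      (cf w2 Ttt) as [r1 r2], (cf w2 Tff) as [s1 s2].
    unfold Cplus, Cmult, RtoC in *; simpl in *.
    split; [exact R1|split; [exact R2|]].
    f_equal; nra.
  - intros (v1 & v2 & S1 & S2 & R1 & R2 & I).
    exists x, t. split; [apply deq_refl|]. split; [exact Hclosed|].
    intros v Sv. exists (rep v1 v2 v).
    apply sharpB_elim in S1 as [K1 N1]. apply sharpB_elim in S2 as [K2 N2].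
    apply sharpB_elim in Sv as [Kv Nv].
    assert (L : leaves (fun u => u = Ttt \/ u = Tff) v) by (apply keys_leaves; auto).
    split; [apply rep_red; auto|].
    assert (Kr : keysB (rep v1 v2 v)) by (apply rep_keys; auto).
    apply sharpB_intro; auto.
    rewrite normB in * by auto. rewrite innerB in I by auto.
    rewrite !rep_cf by auto.
    unfold C_0, RtoC in I. injection I; intros I2 I1.
    destruct (cf v Ttt) as [a1 a2], (cf v Tff) as [b1 b2], (cf v1 Ttt) as [p1 p2], (cf v1 Tff) as [q1 q2],
      (cf v2 Ttt) as [r1 r2], (cf v2 Tff) as [s1 s2].
    unfold Cplus, Cmult; simpl in *.
    transitivity ((a1*a1+a2*a2)*(p1 * (p1 * 1) + p2 * (p2 * 1) + q1 * (q1 * 1) + q2 * (q2 * 1))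
       + (b1*b1+b2*b2)*(r1 * (r1 * 1) + r2 * (r2 * 1) + s1 * (s1 * 1) + s2 * (s2 * 1))
       + 2*((a1*b1+a2*b2)*(p1 * r1 + p2 * r2 + q1 * s1 + q2 * s2)
            - (a1*b2-a2*b1)*(p1 * r2 - p2 * r1 + q1 * s2 - q2 * s1)))%R; [ring|].
    rewrite N1, N2, I1, I2.
    transitivity (a1 * (a1 * 1) + a2 * (a2 * 1) + b1 * (b1 * 1) + b2 * (b2 * 1))%R; [ring | exact Nv].
Qed.
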